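(* For every prime power $q>2$ there is no linear $(q-1,q+1,q)$-AONT, i.e. no invertible $(q+1)\times(q+1)$ matrix over $\mathbb{F}_q$ all of whose $(q-1)\times(q-1)$ submatrices are invertible.
   Context: A linear $(t,s,q)$-AONT over $\mathbb{F}_q$ is given by an invertible $s\times s$ matrix $M$ over $\mathbb{F}_q$ (transform $(y_1,\dots,y_s)=(x_1,\dots,x_s)M^{-1}$); $M$ defines a linear $(t,s,q)$-AONT iff every $t\times t$ submatrix of $M$ is invertible. *)

(* Defs.v *)
From mathcomp Require Import all_boot all_order all_algebra all_field.
Set Implicit Arguments. Unset Strict Implicit. Unset Printing Implicit Defensive.
Import GRing.Theory.
Local Open Scope ring_scope.

Definition submx_of (F : fieldType) (s t : nat) (M : 'M[F]_s)
  (R C : {set 'I_s}) (hR : #|R| = t) (hC : #|C| = t) : 'M[F]_t :=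
  \matrix_(i < t, j < t)
     M (enum_val (cast_ord (esym hR) i)) (enum_val (cast_ord (esym hC) j)).

Definition linear_AONT (F : fieldType) (t s : nat) (M : 'M[F]_s) : Prop :=
  M \in unitmx /\
  forall (R C : {set 'I_s}) (hR : #|R| = t) (hC : #|C| = t),
    submx_of M hR hC \in unitmx.

(* Main.v *)
Require Import Defs.
From mathcomp Require Import all_boot all_order all_algebra all_field all_fingroup all_solvable.
From mathcomp Require Import zify.
Set Implicit Arguments. Unset Strict Implicit. Unset Printing Implicit Defensive.
Import GRing.Theory FinRing.Theory.
Local Open Scope ring_scope.

Lemma natr_card0 (F : finFieldType) : (#|F|%:R : F) = 0.
Proof. by rewrite -cardsT -zmodXgE expg_cardG ?inE. Qed.

Lemma sum_field0 (F : finFieldType) : (2 < #|F|)%N -> \sum_(x : F) x = 0.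
Proof.
move=> hF.
have [c /andP[c0 c1]] : exists c : F, (c != 0) && (c != 1).
  apply/existsP; apply: contraTT hF => /existsPn H.
  rewrite -leqNgt -cardsT.
  apply: (@leq_trans #|[set (0:F); 1]|).
    apply: subset_leq_card; apply/subsetP => x _; rewrite !inE.
    by move: (H x); rewrite negb_and !negbK.
  by rewrite cards2; case: (_ != _).
have e : \sum_(x : F) x = c * \sum_(x : F) x.
  by rewrite mulr_sumr; exact: (reindex_inj (mulfI c0)).
move/eqP: e; rewrite -subr_eq0 -{1}(mul1r (\sum_x x)) -mulrBl mulf_eq0 subr_eq0.
by rewrite eq_sym (negbTE c1) /= => /eqP.
Qed.

Lemma sum_cast (F : finFieldType) m m' (h : m = m') (f : 'I_m -> F) :
  \sum_(i < m') f (cast_ord (esym h) i) = \sum_(i < m) f i.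
Proof. by case: m' / h; apply: eq_bigr => i _; rewrite cast_ord_id. Qed.

Lemma no_bad (F : finFieldType) (M : 'M[F]_(#|F|.+1)) :
  linear_AONT #|F|.-1 M ->
  forall (y : 'rV[F]_(#|F|.+1)) (c1 c2 r1 r2 : 'I_(#|F|.+1)),
  c1 != c2 -> r1 != r2 -> y != 0 ->
  (forall j, j != c1 -> j != c2 -> y 0 j = 0) ->
  (y *m invmx M) 0 r1 = 0 -> (y *m invmx M) 0 r2 = 0 -> False.
Proof.
move=> [Mu Hsub] y c1 c2 r1 r2 hc hr y0 ysupp e1 e2.
have {e1 e2} [x [xdef e1 e2]] : exists x, [/\ x = y *m invmx M, x 0 r1 = 0 & x 0 r2 = 0].
  by exists (y *m invmx M).
have xM : x *m M = y by rewrite xdef -mulmxA mulVmx // mulmx1.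
have x0 : x != 0 by apply: contra y0 => /eqP x0; rewrite -xM x0 mul0mx.
set R := ~: [set r1; r2]; set C := ~: [set c1; c2].
have cardR : #|R| = #|F|.-1.
  by have := cardsC [set r1; r2]; rewrite cards2 hr card_ord add2n => -[h]; exact: (congr1 predn h).
have cardC : #|C| = #|F|.-1.
  by have := cardsC [set c1; c2]; rewrite cards2 hc card_ord add2n => -[h]; exact: (congr1 predn h).
have Su := Hsub R C cardR cardC.
set S := submx_of M cardR cardC in Su.
pose x' := \row_i x 0 (enum_val (cast_ord (esym cardR) i)).
have xS : x' *m S = 0.
  apply/rowP => j; rewrite !mxE.
  set cj := enum_val (cast_ord (esym cardC) j).
  have cjC : cj \in C by exact: enum_valP.
  pose g r := x 0 r * M r cj.
  transitivity (\sum_(i < #|F|.-1) g (enum_val (cast_ord (esym cardR) i))).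
    by apply: eq_bigr => i _; rewrite /g /x' /S /submx_of !mxE.
  rewrite (sum_cast cardR (fun i => g (enum_val i))) -(big_enum_val (A := mem R) g).
  transitivity (\sum_r g r).
    rewrite big_mkcond; apply: eq_bigr => r _.
    case: ifP => // /negbT; rewrite !inE negbK.
    by case/orP => /eqP ->; rewrite /g ?e1 ?e2 mul0r.
  rewrite -/(g _); have := congr1 (fun A : 'rV_ _ => A 0 cj) xM; rewrite mxE /= => ->.
  by move: cjC; rewrite !inE negb_or => /andP[a b]; rewrite ysupp.
have x'0 : x' != 0.
  have [r xr] : exists r, x 0 r != 0.
    apply/existsP; apply: contraR x0 => /existsPn H; apply/eqP/rowP => i.
    by rewrite mxE; apply/eqP; move: (H i); rewrite negbK.
  have rR : r \in R.
    by rewrite !inE negb_or; apply/andP; split; apply: contra xr => /eqP ->; rewrite ?e1 ?e2.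
  apply/eqP => /rowP /(_ (cast_ord cardR (enum_rank_in rR r))).
  rewrite !mxE cast_ordK enum_rankK_in // => /eqP; exact/negP.
apply/negP: x'0; rewrite negbK.
by rewrite -(mulmxK Su x') xS mul0mx.
Qed.

Lemma comb (F : finFieldType) (N : 'M[F]_(#|F|.+1)) : (2 < #|F|)%N ->
  (forall (y : 'rV[F]_(#|F|.+1)) (c1 c2 r1 r2 : 'I_(#|F|.+1)),
  c1 != c2 -> r1 != r2 -> y != 0 ->
  (forall j, j != c1 -> j != c2 -> y 0 j = 0) ->
  (y *m N) 0 r1 = 0 -> (y *m N) 0 r2 = 0 -> False) ->
  N \in unitmx -> False.
Proof.
move=> hF H Nu.
pose o : 'I_(#|F|.+1) := ord0.
have omax : o != ord_max.
  apply/eqP => /(congr1 val) /= h; move: hF; by rewrite -h.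
have rowN (i : 'I_(#|F|.+1)) r : (delta_mx (0 : 'I_1) i *m N) 0 r = N i r.
  rewrite mxE (bigD1 i) //= big1 ?addr0 => [|j /negbTE hj].
    by rewrite mxE !eqxx mul1r.
  by rewrite mxE hj andbF mul0r.
pose K := [set k | N o k != 0].
have K1 : (#|~: K| <= 1)%N.
  apply/card_le1_eqP => k l; rewrite !inE !negbK => hk hl.
  apply/eqP; apply: contraT => hkl; exfalso.
  apply: (H (delta_mx (0 : 'I_1) o) o ord_max l k omax hkl).
  - by apply/eqP => /matrixP /(_ 0 o); rewrite !mxE !eqxx => /eqP; rewrite oner_eq0.
  - by move=> j hj _; rewrite mxE (negbTE hj) andbF.
  - by rewrite rowN (eqP hl).
  - by rewrite rowN (eqP hk).
have Kge : (#|F| <= #|K|)%N.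
  by have := cardsC K; rewrite card_ord; move: K1; lia.
pose f (i k : 'I_(#|F|.+1)) := N i k / N o k.
have inj i : i != o -> {in K &, injective (f i)}.
  move=> io k l; rewrite !inE => hk hl hf; apply/eqP; apply: contraT => hkl.
  exfalso.
  pose y := delta_mx (0 : 'I_1) i - (f i k) *: delta_mx (0 : 'I_1) o.
  have yN r : (y *m N) 0 r = N i r - f i k * N o r.
    by rewrite mulmxBl -scalemxAl -!rowE !mxE.
  apply: (H y i o k l io hkl).
  - apply/eqP => /matrixP /(_ 0 i); rewrite !mxE !eqxx (negbTE io) andbF.
    by rewrite mulr0 subr0 => /eqP; rewrite oner_eq0.
  - by move=> j hj hj'; rewrite !mxE (negbTE hj) (negbTE hj') andbF mulr0 subr0.
  - by rewrite yN /f divfK ?subrr.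
  - by rewrite yN hf /f divfK ?subrr.
have cardK : #|K| = #|F|.
  apply/eqP; rewrite eqn_leq Kge andbT.
  rewrite -(card_in_imset (inj ord_max ltac:(by rewrite eq_sym))); exact: max_card.
have sumK i : i != o -> \sum_(k in K) f i k = 0.
  move=> io; rewrite -(big_imset id (inj i io)) /=.
  have -> : f i @: K = setT.
    apply/eqP; rewrite eqEcard subsetT cardsT card_in_imset.
      by rewrite cardK leqnn.
    exact: (inj i io).
  transitivity (\sum_(x : F) x); last exact: sum_field0 hF.
  by apply: eq_bigl => x; rewrite inE.
pose w := \col_k (N o k)^-1.
have Nw : N *m w = 0.
  apply/colP => i; rewrite !mxE.
  rewrite (bigID (fun k => k \in K)) /= [X in _ + X]big1 ?addr0; last first.
    by move=> k; rewrite inE negbK mxE => /eqP ->; rewrite invr0 mulr0.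
  have [-> | io] := eqVneq i o.
    rewrite (eq_bigr (fun _ => 1)); last by move=> k; rewrite inE mxE => /mulfV.
    by rewrite sumr_const cardK natr_card0.
  transitivity (\sum_(k in K) f i k); last exact: sumK i io.
  by apply: eq_bigr => k _; rewrite mxE.
have [k kK] : exists k, k \in K.
  by apply/card_gt0P; rewrite cardK; move: hF; lia.
have : w != 0.
  apply/eqP => /matrixP /(_ k 0); rewrite !mxE => /eqP; rewrite invr_eq0.
  by move: kK; rewrite inE => /negbTE ->.
by rewrite -(mulKmx Nu w) Nw mulmx0 eqxx.
Qed.

Local Close Scope ring_scope.

Theorem corollary2p25 (F : finFieldType) :
  2 < #|F| ->
  ~ exists M : 'M[F]_(#|F|.+1), linear_AONT #|F|.-1 M.
Proof.
move=> hF [M hM].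
apply: (comb hF (no_bad hM)).
by rewrite unitmx_inv; case: hM.
Qed.
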